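(* Let $\mathbf{W}^0$ be a real $N\times N$ matrix, let $\mathbf{u}=(1,\dots,1)^T/\sqrt N\in\mathbb{R}^N$, $\mathbf{H}=\mathbf{u}\mathbf{u}^T$ and $\boldsymbol\Theta=\mathbf{I}-\mathbf{H}$, and for $n\ge1$ let $\mathbf{W}^\theta_n=(\mathbf{W}^0\boldsymbol\Theta)^{n-1}\mathbf{W}^0$. Then the motif cumulants of $\mathbf{W}^0$ satisfy, for all $n,m\ge1$, $$\kappa_n=\frac{1}{N^n}\,\mathbf{u}^T\mathbf{W}^\theta_n\mathbf{u}=\frac{1}{N^{n+1}}\sum_{i,j}\big((\mathbf{W}^0\boldsymbol\Theta)^{n-1}\mathbf{W}^0\big)_{ij},$$ $$\kappa_{n,m}=\frac{1}{N^{n+m}}\,\mathbf{u}^T\mathbf{W}^\theta_n\,\boldsymbol\Theta\,(\mathbf{W}^\theta_m)^T\mathbf{u}=\frac{1}{N^{n+m}}\,\mathbf{u}^T(\mathbf{W}^0\boldsymbol\Theta)^{n-1}\mathbf{W}^0\boldsymbol\Theta(\mathbf{W}^0)^T(\boldsymbol\Theta(\mathbf{W}^0)^T)^{m-1}\mathbf{u}.$$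
   Context: Notation: for an $N\times N$ matrix $\mathbf{X}$, $\langle\mathbf{X}\rangle=\frac1{N^2}\sum_{i,j}\mathbf{X}_{ij}$. Motif moments: for integers $n,m\ge0$, $\mu_{n,m}=\langle(\mathbf{W}^0)^n((\mathbf{W}^0)^T)^m\rangle/N^{n+m-1}$, and $\mu_n:=\mu_{n,0}$. A composition of a positive integer $n$ is an ordered tuple $(n_1,\dots,n_t)$ of positive integers with $n_1+\dots+n_t=n$; $\mathcal{C}(n)$ denotes the set of compositions of $n$. Motif cumulants: the numbers $\kappa_n$ ($n\ge1$) and $\kappa_{n,m}$ ($n,m\ge1$) are defined recursively (uniquely) by requiring, for all $n,m\ge1$, $$\mu_n=\sum_{(n_1,\dots,n_t)\in\mathcal{C}(n)}\prod_{i=1}^t\kappa_{n_i},\qquad \mu_{n,m}=\sum_{\substack{(n_1,\dots,n_t)\in\mathcal{C}(n)\\(m_1,\dots,m_s)\in\mathcal{C}(m)}}\Big(\prod_{i=2}^t\kappa_{n_i}\Big)\big(\kappa_{n_1,m_1}+\kappa_{n_1}\kappa_{m_1}\big)\Big(\prod_{j=2}^s\kappa_{m_j}\Big),$$ where an empty product equals $1$. *)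

(* Defs.v *)
From HB Require Import structures.
From mathcomp Require Import all_boot all_order all_algebra.
Set Implicit Arguments. Unset Strict Implicit. Unset Printing Implicit Defensive.
Import Order.TTheory GRing.Theory Num.Theory.
Local Open Scope ring_scope.

Definition mavg (R : fieldType) (N : nat) (X : 'M[R]_N) : R :=
  (N%:R ^+ 2)^-1 * \sum_(i < N) \sum_(j < N) X i j.

Definition motif_moment (R : fieldType) (N : nat) (W : 'M[R]_N) (n m : nat) : R :=
  mavg (W ^+ n * (W^T) ^+ m) / N%:R ^+ (n + m - 1).

(* Sum of F c over all compositions c = (c_1,...,c_t) of n, i.e. ordered
   tuples of positive integers summing to n (each part is <= n, and t <= n). *)
Definition comp_sum (R : nmodType) (n : nat) (F : seq nat -> R) : R :=
  \sum_(t < n.+1) \sum_(c : t.-tuple 'I_n.+1 |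
      (sumn (map val c) == n) && all (fun i => 0 < i)%N (map val c))
    F (map val c).

Definition is_motif_cumulants (R : fieldType) (N : nat) (W : 'M[R]_N)
    (kappa : nat -> R) (kappa2 : nat -> nat -> R) : Prop :=
  (forall n, (0 < n)%N ->
     motif_moment W n 0 = comp_sum n (fun c => \prod_(i <- c) kappa i)) /\
  (forall n m, (0 < n)%N -> (0 < m)%N ->
     motif_moment W n m =
       comp_sum n (fun c => comp_sum m (fun d =>
         (\prod_(i <- behead c) kappa i) *
         (kappa2 (head 0%N c) (head 0%N d) + kappa (head 0%N c) * kappa (head 0%N d)) *
         (\prod_(j <- behead d) kappa j)))).

Definition uvec (R : rcfType) (N : nat) : 'cV[R]_N := const_mx (Num.sqrt (N%:R))^-1.
Definition Theta (R : rcfType) (N : nat) : 'M[R]_N := 1%:M - uvec R N *m (uvec R N)^T.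
Definition Wtheta (R : rcfType) (N : nat) (W : 'M[R]_N) (n : nat) : 'M[R]_N :=
  (W *m Theta R N) ^+ (n - 1) *m W.

(* Main.v *)
Require Import Defs.
From HB Require Import structures.
From mathcomp Require Import all_boot all_order all_algebra.
From mathcomp Require Import zify ring lra.
Import Order.TTheory GRing.Theory Num.Theory.
Set Implicit Arguments. Unset Strict Implicit. Unset Printing Implicit Defensive.
Local Open Scope ring_scope.


Definition pos_comp (n : nat) (s : seq nat) : bool :=
  (sumn s == n) && all (fun i => 0 < i)%N s.

Lemma size_le_sumn (s : seq nat) : all (fun i => 0 < i)%N s -> (size s <= sumn s)%N.
Proof. elim: s => //= x s IH /andP[x0 /IH]; lia. Qed.

Lemma mem_le_sumn (s : seq nat) x : x \in s -> (x <= sumn s)%N.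
Proof. elim: s => //= y s IH; rewrite inE => /orP[/eqP->|/IH]; lia. Qed.

Definition Stup (n : nat) (t : 'I_n.+1) : seq (seq nat) :=
  [seq map val (c : t.-tuple 'I_n.+1) | c in [pred c : t.-tuple 'I_n.+1 | pos_comp n (map val c)]].

Definition CL (n : nat) : seq (seq nat) :=
  [seq s | t <- index_enum 'I_n.+1, s <- Stup t].

Lemma comp_sumCL (R : nmodType) n (F : seq nat -> R) :
  comp_sum n F = \sum_(s <- CL n) F s.
Proof.
rewrite /CL big_allpairs_dep /comp_sum; apply: eq_bigr => t _.
rewrite /Stup big_image /=; apply: eq_bigl => c; by rewrite inE.
Qed.

Lemma mem_Stup n (t : 'I_n.+1) s : s \in Stup t -> pos_comp n s && (size s == t).
Proof.
case/imageP => c; rewrite inE => Pc ->; by rewrite Pc size_map size_tuple eqxx.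
Qed.

Lemma CL_mem n s : (s \in CL n) = pos_comp n s.
Proof.
apply/idP/idP.
  by case/allpairsPdep => t [y [_ /mem_Stup /andP[H _] ->]].
move=> Ps; apply/allpairsPdep.
have hs : (size s < n.+1)%N.
  by move: Ps => /andP[/eqP <- /size_le_sumn H]; rewrite ltnS.
exists (Ordinal hs), s; split => //; first by rewrite mem_index_enum.
have hsz : size (map (@inord n) s) == Ordinal hs by rewrite size_map.
apply/imageP; exists (Tuple hsz); last first.
  rewrite /= -map_comp -[LHS]map_id; apply/eq_in_map => x xs /=.
  rewrite inordK //; move: Ps => /andP[/eqP <- _]; have := @mem_le_sumn _ _ xs; lia.
rewrite inE /=.
suff -> : [seq val i | i <- [seq inord i | i <- s] : seq 'I_n.+1] = s by [].
rewrite -map_comp -[RHS]map_id; apply/eq_in_map => x xs /=.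
rewrite inordK //; move: Ps => /andP[/eqP <- _]; have := @mem_le_sumn _ _ xs; lia.
Qed.

Lemma CL_uniq n : uniq (CL n).
Proof.
apply: allpairs_uniq_dep.
- exact: index_enum_uniq.
- move=> t _; rewrite map_inj_uniq ?enum_uniq //.
  by move=> c c' /(inj_map val_inj) /val_inj.
- move=> [t1 y1] [t2 y2] /allpairsPdep [x [y [_ H1 [e1 e2]]]]
      /allpairsPdep [x' [y' [_ H2 [e1' e2']]]] /= E.
  subst. move: H1 H2 => /mem_Stup /andP[_ /eqP s1] /mem_Stup /andP[_ /eqP s2].
  by have -> : x = x' by apply: val_inj; rewrite /= -s1 -s2.
Qed.

Lemma comp_sum_perm (R : nmodType) n (F : seq nat -> R) (L : seq (seq nat)) :
  uniq L -> (forall s, (s \in L) = pos_comp n s) -> comp_sum n F = \sum_(s <- L) F s.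
Proof.
move=> uL mL; rewrite comp_sumCL; apply: perm_big; apply: uniq_perm => //.
  exact: CL_uniq.
by move=> s; rewrite CL_mem mL.
Qed.

Lemma comp_sum0 (R : nmodType) (F : seq nat -> R) : comp_sum 0%N F = F [::].
Proof.
rewrite (@comp_sum_perm R 0%N F [:: [::]]) ?big_seq1 //.
move=> [|x s]; rewrite inE /pos_comp /= ?andbT //; case: x => [|x]; by rewrite ?andbF ?addSn.
Qed.

Lemma comp_sum_eq (R : nmodType) n (F G : seq nat -> R) :
  (forall s, pos_comp n s -> F s = G s) -> comp_sum n F = comp_sum n G.
Proof.
move=> H; rewrite !comp_sumCL big_seq_cond [RHS]big_seq_cond.
by apply: eq_bigr => s /andP[]; rewrite CL_mem => /H.
Qed.

Lemma comp_sumMl (R : pzSemiRingType) n a (F : seq nat -> R) :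
  comp_sum n (fun c => a * F c) = a * comp_sum n F.
Proof. by rewrite !comp_sumCL mulr_sumr. Qed.

Lemma comp_sumMr (R : pzSemiRingType) n a (F : seq nat -> R) :
  comp_sum n (fun c => F c * a) = comp_sum n F * a.
Proof. by rewrite !comp_sumCL mulr_suml. Qed.

Lemma comp_sum_rec (R : nmodType) n (F : seq nat -> R) : (0 < n)%N ->
  comp_sum n F = \sum_(k < n) comp_sum (n - k.+1) (fun c => F (k.+1 :: c)).
Proof.
move=> n0.
under eq_bigr do rewrite comp_sumCL.
rewrite -(big_mkord xpredT (fun k => \sum_(s <- CL (n - k.+1)) F (k.+1 :: s))).
rewrite -(big_allpairs_dep (h := fun k c => k.+1 :: c)).
apply: comp_sum_perm.
  apply: allpairs_uniq_dep; first exact: iota_uniq.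
    by move=> k _; exact: CL_uniq.
  move=> [k1 y1] [k2 y2] _ _ /= [e1 e2]; by subst.
move=> s; apply/idP/idP.
  case/allpairsPdep => k [c [kn]]; rewrite CL_mem => /andP[/eqP sc pc] ->.
  rewrite mem_iota in kn; rewrite /pos_comp /= sc pc /= andbT; apply/eqP; lia.
case: s => [|x c]; first by rewrite /pos_comp /=; case: n n0.
rewrite /pos_comp /= => /andP[/eqP sc /andP[x0 pc]].
apply/allpairsPdep; exists x.-1, c; split.
- rewrite mem_iota; lia.
- rewrite CL_mem /pos_comp pc andbT; apply/eqP; lia.
- by rewrite prednK.
Qed.


Definition msum (R : nmodType) (N : nat) (X : 'M[R]_N) : R :=
  \sum_(i < N) \sum_(j < N) X i j.

Definition Hm (R : rcfType) (N : nat) : 'M[R]_N := uvec R N *m (uvec R N)^T.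

Lemma HmE (R : rcfType) N k l : Hm R N k l = (N%:R)^-1.
Proof.
rewrite /Hm /uvec !mxE big_ord1 !mxE -expr2 exprVn sqr_sqrtr //.
Qed.

Lemma msumD (R : nmodType) N (X Y : 'M[R]_N) : msum (X + Y) = msum X + msum Y.
Proof.
rewrite /msum -big_split; apply: eq_bigr => i _; rewrite -big_split.
by apply: eq_bigr => j _; rewrite mxE.
Qed.

Lemma msum_sum (R : nmodType) N I (r : seq I) (P : pred I) (F : I -> 'M[R]_N) :
  msum (\sum_(i <- r | P i) F i) = \sum_(i <- r | P i) msum (F i).
Proof.
rewrite /msum; under eq_bigr do under eq_bigr do rewrite summxE.
under eq_bigr do rewrite exchange_big /=.
by rewrite exchange_big.
Qed.

Lemma msum_tr (R : nmodType) N (X : 'M[R]_N) : msum X^T = msum X.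
Proof. rewrite /msum exchange_big; apply: eq_bigr => i _; apply: eq_bigr => j _; by rewrite mxE. Qed.

Lemma msumH (R : rcfType) N (X Y : 'M[R]_N) :
  msum (X *m Hm R N *m Y) = (N%:R)^-1 * msum X * msum Y.
Proof.
rewrite /msum -mulrA mulr_suml mulr_sumr; apply: eq_bigr => i _.
have E : forall j, (X *m Hm R N *m Y) i j = (N%:R)^-1 * (\sum_(k < N) X i k) * \sum_(l < N) Y l j.
  move=> j; rewrite mxE mulr_sumr; apply: eq_bigr => l _.
  rewrite mxE; under eq_bigr do rewrite HmE.
  by rewrite -mulr_suml [_ * N%:R^-1]mulrC.
under eq_bigr do rewrite E.
by rewrite -mulr_sumr [in RHS]exchange_big mulrA.
Qed.

Lemma uXu (R : rcfType) N (X : 'M[R]_N) :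
  ((uvec R N)^T *m X *m uvec R N) ord0 ord0 = (N%:R)^-1 * msum X.
Proof.
rewrite /msum exchange_big mulr_sumr mxE; apply: eq_bigr => j _.
rewrite mxE mulr_suml mulr_sumr; apply: eq_bigr => i _.
rewrite !mxE; set s := (Num.sqrt _)^-1.
have -> : (N%:R)^-1 = s * s :> R by rewrite -expr2 /s exprVn sqr_sqrtr.
ring.
Qed.

Lemma trmx_exp (R : comPzSemiRingType) N (A : 'M[R]_N) k : (A ^+ k)^T = (A^T) ^+ k.
Proof.
elim: k => [|k IH]; first by rewrite !expr0 trmx1.
by rewrite exprS trmx_mul IH exprSr.
Qed.

Lemma Hm_tr (R : rcfType) N : (Hm R N)^T = Hm R N.
Proof. by rewrite /Hm trmx_mul trmxK. Qed.

Lemma Theta_tr (R : rcfType) N : (Theta R N)^T = Theta R N.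
Proof. by rewrite /Theta linearB /= trmx1 -/(Hm R N) Hm_tr. Qed.

Definition Pw (R : rcfType) N (W : 'M[R]_N) (k : nat) : 'M[R]_N := (W * Theta R N) ^+ k * W.
Definition Aw (R : rcfType) N (W : 'M[R]_N) (i : nat) : 'M[R]_N :=
  if i == 0%N then 1 else W ^+ i * Hm R N.

Lemma Theta_Hm (R : rcfType) N : Theta R N + Hm R N = 1.
Proof. by rewrite /Theta subrK. Qed.

Lemma lastblock (R : rcfType) N (W : 'M[R]_N) j :
  W ^+ j.+1 = \sum_(k < j.+1) Aw W (j - k) * Pw W k.
Proof.
elim: j => [|j IH].
  by rewrite big_ord1 /Aw /Pw /= expr0 !mul1r expr1.
rewrite big_ord_recl subn0 /= /Aw /= -/(Aw W _) /Pw expr0 mul1r.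
rewrite exprSr -[X in W ^+ j.+1 * X]mul1r -(Theta_Hm R N) mulrDl mulrDr addrC.
congr (_ + _); first by rewrite mulrA.
rewrite mulrA IH !mulr_suml; apply: eq_bigr => k _.
by rewrite subSS /Pw exprSr !mulrA Theta_Hm.
Qed.

Definition Bw (R : rcfType) N (W : 'M[R]_N) (i : nat) : 'M[R]_N :=
  if i == 0%N then 1 else Hm R N * (W^T) ^+ i.

Lemma firstblockT (R : rcfType) N (W : 'M[R]_N) j :
  (W^T) ^+ j.+1 = \sum_(k < j.+1) (Pw W k)^T * Bw W (j - k).
Proof.
rewrite -trmx_exp lastblock linear_sum /=; apply: eq_bigr => k _.
rewrite trmx_mul /Aw /Bw; case: eqP => _; first by rewrite trmx1.
by rewrite [(_ * Hm R N)^T]trmx_mul Hm_tr trmx_exp.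
Qed.

Definition alpha (R : rcfType) N (W : 'M[R]_N) (i : nat) : R :=
  if i == 0%N then 1 else (N%:R)^-1 * msum (W ^+ i).

Lemma msumA (R : rcfType) N (W X : 'M[R]_N) i :
  msum (Aw W i * X) = alpha W i * msum X.
Proof.
rewrite /Aw /alpha; case: eqP => _; first by rewrite !mul1r.
by rewrite msumH.
Qed.

Lemma msumAB (R : rcfType) N (W X : 'M[R]_N) i j :
  msum (Aw W i * X * Bw W j) = alpha W i * msum X * alpha W j.
Proof.
case: j => [|j]; rewrite /Bw /=.
  by rewrite mulr1 msumA /alpha /= mulr1.
rewrite -mulrA msumA /alpha /=.
have -> : X * (Hm R N * W^T ^+ j.+1) = X *m Hm R N *m W^T ^+ j.+1 by rewrite mulrA.
rewrite msumH -trmx_exp msum_tr; ring.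
Qed.

Lemma invXD (R : fieldType) (x : R) a b : (x ^+ (a + b))^-1 = (x ^+ a)^-1 * (x ^+ b)^-1.
Proof. by rewrite exprD invfM. Qed.

Definition gg (R : rcfType) N (W : 'M[R]_N) (j : nat) : R :=
  if j == 0%N then 1 else (N%:R ^+ j.+1)^-1 * msum (W ^+ j).

Lemma alpha_gg (R : rcfType) N (W : 'M[R]_N) i :
  alpha W i * (N%:R ^+ i)^-1 = gg W i.
Proof.
rewrite /alpha /gg; case: eqP => [->|_]; first by rewrite expr0 invr1 mulr1.
rewrite exprS invfM; ring.
Qed.

Definition Kf (R : rcfType) N (W : 'M[R]_N) (n : nat) : R :=
  (N%:R ^+ n.+1)^-1 * msum (Pw W n.-1).
Definition K2f (R : rcfType) N (W : 'M[R]_N) (a b : nat) : R :=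
  (N%:R ^+ (a + b).+1)^-1 * msum (Pw W a.-1 * Theta R N * (Pw W b.-1)^T).

Lemma expand1 (R : rcfType) N (W : 'M[R]_N) n : (0 < n)%N ->
  (N%:R ^+ n.+1)^-1 * msum (W ^+ n) = \sum_(k < n) gg W (n - k.+1) * Kf W k.+1.
Proof.
case: n => // j _; rewrite lastblock msum_sum mulr_sumr; apply: eq_bigr => k _.
rewrite msumA subSS -alpha_gg /Kf /=.
have hk := ltn_ord k.
rewrite (_ : j.+2 = (j - k) + k.+2)%N; last by lia.
rewrite invXD; ring.
Qed.

Lemma splitM (R : rcfType) N (X Y : 'M[R]_N) :
  msum (X * Y^T) = msum (X * Theta R N * Y^T) + (N%:R)^-1 * msum X * msum Y.
Proof.
rewrite -[X in msum (X * _)]mulr1 -(Theta_Hm R N) mulrDr mulrDl msumD.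
by rewrite (msumH X) msum_tr.
Qed.

Lemma expand2 (R : rcfType) N (W : 'M[R]_N) n m : (0 < n)%N -> (0 < m)%N ->
  (N%:R ^+ (n + m).+1)^-1 * msum (W ^+ n * W^T ^+ m) =
  \sum_(k < n) \sum_(l < m)
     gg W (n - k.+1) * (K2f W k.+1 l.+1 + Kf W k.+1 * Kf W l.+1) * gg W (m - l.+1).
Proof.
case: n => // i _; case: m => // j _.
rewrite lastblock firstblockT big_distrl /= (@msum_sum _ N _ _ xpredT) mulr_sumr; apply: eq_bigr => k _.
rewrite [Aw _ _ * _ * _]big_distrr /= (@msum_sum _ N _ _ xpredT) mulr_sumr; apply: eq_bigr => l _.
have hk := ltn_ord k; have hl := ltn_ord l.
rewrite (_ : Aw W (i - k) * Pw W k * ((Pw W l)^T * Bw W (j - l)) =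
             Aw W (i - k) * (Pw W k * (Pw W l)^T) * Bw W (j - l)); last by rewrite !mulrA.
rewrite msumAB splitM !subSS -!alpha_gg /K2f /Kf /=.
rewrite (_ : (i.+1 + j.+1).+1 = (i - k) + (k.+1 + l.+1).+1 + (j - l))%N; last by lia.
have E : (N%:R ^+ k.+2)^-1 * (N%:R ^+ l.+2)^-1 =
         (N%:R ^+ (k.+1 + l.+1).+1)^-1 * (N%:R ^+ 1)^-1 :> R.
  by rewrite -!invXD (_ : (k.+2 + l.+2 = (k.+1 + l.+1).+1 + 1)%N); last lia.
rewrite !invXD.
rewrite (_ : (N%:R ^+ k.+2)^-1 * msum (Pw W k) * ((N%:R ^+ l.+2)^-1 * msum (Pw W l))
   = (N%:R ^+ k.+2)^-1 * (N%:R ^+ l.+2)^-1 * msum (Pw W k) * msum (Pw W l)); last by ring.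
rewrite E expr1; ring.
Qed.


Lemma comp_prod_rec (R : comPzSemiRingType) (kap : nat -> R) n : (0 < n)%N ->
  comp_sum n (fun c => \prod_(i <- c) kap i) =
  \sum_(k < n) kap k.+1 * comp_sum (n - k.+1) (fun c => \prod_(i <- c) kap i).
Proof.
move=> n0; rewrite comp_sum_rec //; apply: eq_bigr => k _.
rewrite -comp_sumMl; apply: comp_sum_eq => s _; by rewrite big_cons.
Qed.

Definition GG (R : rcfType) N (W : 'M[R]_N) j :=
  comp_sum j (fun c => \prod_(i <- c) Kf W i).

Lemma gg_G (R : rcfType) N (W : 'M[R]_N) j : gg W j = GG W j.
Proof.
elim/ltn_ind: j => j IH.
case: j IH => [|j] IH; first by rewrite /gg /GG comp_sum0 big_nil.
rewrite /gg (_ : (j.+1 == 0%N) = false) // expand1 // /GG comp_prod_rec //.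
apply: eq_bigr => k _; rewrite IH; first by rewrite mulrC.
by rewrite subSS ltnS leq_subr.
Qed.

Lemma mu1 (R : rcfType) N (W : 'M[R]_N) n : (0 < n)%N ->
  motif_moment W n 0 = (N%:R ^+ n.+1)^-1 * msum (W ^+ n).
Proof.
case: n => // n _; rewrite /motif_moment /mavg expr0 mulr1 addn0 subn1 -/(msum _).
rewrite mulrC mulrA -invfM -exprD; congr (_^-1 * _); congr (_ ^+ _); lia.
Qed.

Lemma mu2 (R : rcfType) N (W : 'M[R]_N) n m : (0 < n)%N ->
  motif_moment W n m = (N%:R ^+ (n + m).+1)^-1 * msum (W ^+ n * W^T ^+ m).
Proof.
case: n => // n _; rewrite /motif_moment /mavg -/(msum _).
rewrite mulrC mulrA -invfM -exprD; congr (_^-1 * _); congr (_ ^+ _); lia.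
Qed.

Lemma prod_mem_eq (R : comPzSemiRingType) (kap K : nat -> R) s :
  (forall x, x \in s -> kap x = K x) ->
  \prod_(i <- s) kap i = \prod_(i <- s) K i.
Proof.
move=> H; rewrite big_seq [RHS]big_seq; apply: eq_bigr => i; exact: H.
Qed.

Lemma uniq1 (R : comPzRingType) (kap K : nat -> R) :
  (forall n, (0 < n)%N -> comp_sum n (fun c => \prod_(i <- c) kap i) =
                         comp_sum n (fun c => \prod_(i <- c) K i)) ->
  forall n, (0 < n)%N -> kap n = K n.
Proof.
move=> H n; elim/ltn_ind: n => n IH n0.
have := H n n0; rewrite (comp_prod_rec kap n0) (comp_prod_rec K n0).
case: n IH n0 => // n IH _.
rewrite !big_ord_recr /= subnn !comp_sum0 !big_nil !mulr1.
have -> : \sum_(i < n) kap i.+1 * comp_sum (n.+1 - i.+1) (fun c => \prod_(i0 <- c) kap i0)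
        = \sum_(i < n) K i.+1 * comp_sum (n.+1 - i.+1) (fun c => \prod_(i0 <- c) K i0).
  apply: eq_bigr => i _; have hi := ltn_ord i.
  rewrite IH; [| exact: hi | by []].
  congr (_ * _); apply: comp_sum_eq => s /andP[/eqP ss ps].
  apply: prod_mem_eq => x xs; apply: IH; last by move/allP: ps => /(_ x xs).
  have := mem_le_sumn xs; rewrite ss; lia.
by move/addrI.
Qed.

Lemma comp_sum_sum (R : nmodType) n m (F : nat -> seq nat -> R) :
  comp_sum n (fun c => \sum_(l < m) F l c) = \sum_(l < m) comp_sum n (F l).
Proof.
rewrite comp_sumCL exchange_big; apply: eq_bigr => l _; by rewrite comp_sumCL.
Qed.

Lemma conv2 (R : comPzSemiRingType) (kap : nat -> R) (k2 : nat -> nat -> R) n m :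
  (0 < n)%N -> (0 < m)%N ->
  comp_sum n (fun c => comp_sum m (fun d =>
         (\prod_(i <- behead c) kap i) *
         (k2 (head 0%N c) (head 0%N d) + kap (head 0%N c) * kap (head 0%N d)) *
         (\prod_(j <- behead d) kap j))) =
  \sum_(k < n) \sum_(l < m)
     comp_sum (n - k.+1) (fun c => \prod_(i <- c) kap i) *
     (k2 k.+1 l.+1 + kap k.+1 * kap l.+1) *
     comp_sum (m - l.+1) (fun c => \prod_(i <- c) kap i).
Proof.
move=> n0 m0; rewrite comp_sum_rec //; apply: eq_bigr => k _.
rewrite (comp_sum_eq (G := fun c => \sum_(l < m) comp_sum (m - l.+1) (fun d =>
     (\prod_(i <- c) kap i * (k2 k.+1 l.+1 + kap k.+1 * kap l.+1)) *
     (\prod_(j <- d) kap j)))); last first.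
  by move=> c _; rewrite comp_sum_rec.
rewrite (@comp_sum_sum _ (n - k.+1) m (fun l c => comp_sum (m - l.+1) (fun d =>
     (\prod_(i <- c) kap i * (k2 k.+1 l.+1 + kap k.+1 * kap l.+1)) *
     (\prod_(j <- d) kap j)))).
apply: eq_bigr => l _.
rewrite (comp_sum_eq (G := fun c => (\prod_(i <- c) kap i * (k2 k.+1 l.+1 + kap k.+1 * kap l.+1)) *
     comp_sum (m - l.+1) (fun d => \prod_(j <- d) kap j))); last first.
  by move=> c _; rewrite comp_sumMl.
by rewrite comp_sumMr comp_sumMr.
Qed.

Definition S2 (R : rcfType) (G K : nat -> R) (f : nat -> nat -> R) n m :=
  \sum_(k < n) \sum_(l < m) G (n - k.+1)%N * (f k.+1 l.+1 + K k.+1 * K l.+1) * G (m - l.+1)%N.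

Lemma uniq2 (R : rcfType) (G K : nat -> R) (a2 b2 : nat -> nat -> R) :
  G 0%N = 1 ->
  (forall n m, (0 < n)%N -> (0 < m)%N -> S2 G K a2 n m = S2 G K b2 n m) ->
  forall n m, (0 < n)%N -> (0 < m)%N -> a2 n m = b2 n m.
Proof.
move=> G0 H n m.
suff: forall b n m, (n + m <= b)%N -> (0 < n)%N -> (0 < m)%N -> a2 n m = b2 n m.
  by move=> /(_ (n + m)%N n m (leqnn _)).
elim=> [|b IH] {}n {}m nb n0 m0; first by lia.
case: n nb n0 => // n' nb _; case: m nb m0 => // m' nb _.
have := H _ _ (ltn0Sn n') (ltn0Sn m'); rewrite /S2 => E.
have D : forall (k : 'I_n'.+1) (l : 'I_m'.+1),
   G (n'.+1 - k.+1)%N * (a2 k.+1 l.+1 + K k.+1 * K l.+1) * G (m'.+1 - l.+1)%N -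
   G (n'.+1 - k.+1)%N * (b2 k.+1 l.+1 + K k.+1 * K l.+1) * G (m'.+1 - l.+1)%N =
   if (k == ord_max) && (l == ord_max) then a2 n'.+1 m'.+1 - b2 n'.+1 m'.+1 else 0.
  move=> k l; case: ifP => [/andP[/eqP -> /eqP ->]|kl].
    rewrite /= !subnn G0 !mul1r !mulr1; ring.
  rewrite IH; first by rewrite subrr.
  - have hk := ltn_ord k; have hl := ltn_ord l.
    have : (k != ord_max) || (l != ord_max) by rewrite -negb_and kl.
    case/orP => /eqP ne.
      have : (k : nat) <> n' by move=> e; apply: ne; apply: val_inj.
      lia.
    have : (l : nat) <> m' by move=> e; apply: ne; apply: val_inj.
    lia.
  - by [].
  - by [].
have : \sum_(k < n'.+1) \sum_(l < m'.+1)
         (if (k == ord_max) && (l == ord_max) then a2 n'.+1 m'.+1 - b2 n'.+1 m'.+1 else 0) = 0.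
  under eq_bigr do under eq_bigr do rewrite -D.
  under eq_bigr do rewrite sumrB.
  by rewrite sumrB E subrr.
set c := a2 n'.+1 m'.+1 - b2 n'.+1 m'.+1.
have Z : \sum_(i < n'.+1 | i != ord_max) \sum_(l < m'.+1)
   (if (i == ord_max) && (l == ord_max) then c else 0) = 0.
  by apply: big1 => k /negbTE kn; apply: big1 => l _; rewrite kn.
have Z2 : \sum_(l < m'.+1 | l != ord_max)
   (if (ord_max == ord_max :> 'I_n'.+1) && (l == ord_max) then c else 0) = 0.
  by apply: big1 => l /negbTE ln; rewrite ln andbF.
rewrite (bigD1 ord_max) //= Z addr0 (bigD1 ord_max) //= Z2 addr0 !eqxx /=.
by move/eqP; rewrite subr_eq0 => /eqP.
Qed.

Lemma mom1 (R : rcfType) N (W : 'M[R]_N) n : (0 < n)%N ->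
  motif_moment W n 0 = GG W n.
Proof.
move=> n0; rewrite -gg_G mu1 //; case: n n0 => // n _.
Qed.

Lemma mom2 (R : rcfType) N (W : 'M[R]_N) n m : (0 < n)%N -> (0 < m)%N ->
  motif_moment W n m = S2 (GG W) (Kf W) (K2f W) n m.
Proof.
move=> n0 m0; rewrite mu2 // expand2 // /S2.
apply: eq_bigr => k _; apply: eq_bigr => l _; by rewrite !gg_G.
Qed.

Theorem mainTheorem2 (R : rcfType) (N : nat) (W : 'M[R]_N)
    (kappa : nat -> R) (kappa2 : nat -> nat -> R) :
  is_motif_cumulants W kappa kappa2 ->
  (forall n, (0 < n)%N ->
     kappa n = (N%:R ^+ n)^-1 * ((uvec R N)^T *m Wtheta W n *m uvec R N) ord0 ord0 /\
     kappa n = (N%:R ^+ n.+1)^-1 *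
               \sum_(i < N) \sum_(j < N) ((W *m Theta R N) ^+ (n - 1) *m W) i j) /\
  (forall n m, (0 < n)%N -> (0 < m)%N ->
     kappa2 n m = (N%:R ^+ (n + m))^-1 *
       ((uvec R N)^T *m Wtheta W n *m Theta R N *m (Wtheta W m)^T *m uvec R N) ord0 ord0 /\
     kappa2 n m = (N%:R ^+ (n + m))^-1 *
       ((uvec R N)^T *m (W *m Theta R N) ^+ (n - 1) *m W *m Theta R N *m W^T
          *m (Theta R N *m W^T) ^+ (m - 1) *m uvec R N) ord0 ord0).
Proof.
move=> [H1 H2].
have EK : forall n, (0 < n)%N -> kappa n = Kf W n.
  apply: uniq1 => n n0; rewrite -H1 //; exact: mom1.
have EG : forall j, comp_sum j (fun c => \prod_(i <- c) kappa i) = GG W j.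
  move=> j; apply: comp_sum_eq => s /andP[_ /allP ps].
  apply: prod_mem_eq => x xs; apply: EK; exact: ps.
have EK2 : forall n m, (0 < n)%N -> (0 < m)%N -> kappa2 n m = K2f W n m.
  apply: (uniq2 (G := GG W) (K := Kf W)).
    by rewrite /GG comp_sum0 big_nil.
  move=> n m n0 m0; rewrite -mom2 // H2 // conv2 // /S2.
  apply: eq_bigr => k _; apply: eq_bigr => l _.
  by rewrite !EG !EK.
split.
  move=> n n0; rewrite EK //; split.
    rewrite uXu /Kf /Wtheta mulrA -invfM -exprSr subn1; by [].
  by rewrite /Kf subn1.
move=> n m n0 m0; rewrite EK2 //.
have Ex : forall A B : 'M[R]_N,
  ((uvec R N)^T *m A *m Theta R N *m B *m uvec R N) =
  ((uvec R N)^T *m (A *m Theta R N *m B) *m uvec R N) by move=> A B; rewrite !mulmxA.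
split.
  rewrite Ex uXu /K2f /Wtheta mulrA -invfM -exprSr !subn1; by [].
rewrite -(mulmxA _ W^T).
have -> : W^T *m (Theta R N *m W^T) ^+ (m - 1) = (Wtheta W m)^T.
  by rewrite /Wtheta trmx_mul trmx_exp trmx_mul Theta_tr.
rewrite -[(uvec R N)^T *m _ *m W](mulmxA _ _ W) -/(Wtheta W n) Ex uXu /K2f /Wtheta.
rewrite mulrA -invfM -exprSr !subn1; by [].
Qed.
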